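(* Among the $q^{TM}$ distinct assignments of the matrix $S\in\mathbb{F}(q)^{T\times M}$, at most a fraction $q^{-1}\binom{n}{k}TM$ of them induce a matrix $Q_A\cdot G$ of rank less than $M$ for some set $A\subset I_n$ with $|A|=n-k$. (Consequently, if $q>\binom{n}{k}TM$, there exists an assignment of $S$ for which $Q_A\cdot G$ has rank $M$ for every such $A$.)
   Context: Fix a balanced incomplete block design $(I_n,\mathcal{B})\in S_\lambda(2,r,n)$ (every element of $I_n=\{1,\dots,n\}$ lies in the same number of blocks, each block has $r$ elements, every pair of elements lies in exactly $\lambda$ blocks), with blocks $B_1,\dots,B_{N^*}$, where $N^*=\lambda n(n-1)/(r(r-1))$. For $A\subset I_n$ with $|A|=n-k$ define $T(A)=\sum_{B\in\mathcal{B}:|B\cap A|\ge 2}(|B\cap A|-1)$ and $T=\max_{A\subseteq I_n,|A|=n-k}T(A)$. Let $M=(r-1)N^*-T$. The $M$ information symbols form a vector $\vec d\in\mathbb{F}(q)^M$; with $S\in\mathbb{F}(q)^{T\times M}$ and $G=[I,S^t]^t$ (size $(r-1)N^*\times M$), the vector $G\vec d$ is written column-wise into an $(r-1)\times N^*$ matrix $D$. For each column $j$ a parity symbol $P_j=\sum_{i=1}^{r-1}D_{i,j}$ is formed, and the $r$ symbols $(D_{1,j},\dots,D_{r-1,j},P_j)$ (the $j$-th parity group) are stored one per disk on the disks of block $B_j$. Let $R=[I,\vec 1^t]^t$ be the $r\times(r-1)$ matrix consisting of the $(r-1)\times(r-1)$ identity with an all-ones row appended. For the set $A$ of inaccessible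 disks and each $j$: if $|B_j\cap A|\le 1$, let $R_j$ be $R$ with its last row set to zero; if $|B_j\cap A|\ge 2$, let $R_j$ be $R$ with only the rows corresponding to the symbols of parity group $j$ stored on disks in $B_j\setminus A$ kept and all other rows set to zero. Let $Q_A$ be the $(rN^* )\times(r-1)N^*$ block-diagonal matrix with diagonal blocks $R_1,\dots,R_{N^*}$. Then $Q_A G\vec d$ is the vector of information obtainable when disks in $A$ are inaccessible, so $\vec d$ is decodable iff $Q_A G$ has rank $M$. *)

(* Defs.v *)
From HB Require Import structures.
From mathcomp Require Import all_boot all_order all_algebra.
Set Implicit Arguments. Unset Strict Implicit. Unset Printing Implicit Defensive.
Import GRing.Theory.
Local Open Scope ring_scope.

(* The disks are I_n = 'I_n (0-based).  The design has N = N^* blocks,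
   indexed by 'I_N, block j being B j : {set 'I_n}. *)

Definition is_bibd (n r lam N : nat) (B : 'I_N -> {set 'I_n}) : Prop :=
  [/\ (forall j, #|B j| = r),
      (exists rho : nat, forall x : 'I_n, #|[set j | x \in B j]| = rho)
    & (forall x y : 'I_n, x != y ->
          #|[set j | (x \in B j) && (y \in B j)]| = lam)].

(* place j s = the disk of block B j on which the s-th symbol (s < r) of the
   j-th parity group is stored (symbols 0..r-2 = D_{.,j}, symbol r-1 = P_j);
   this must be a bijection 'I_r -> B j. *)
Definition valid_placement (n r N : nat) (B : 'I_N -> {set 'I_n})
    (place : 'I_N -> 'I_r -> 'I_n) : Prop :=
  forall j, injective (place j) /\ (forall s, place j s \in B j).

Definition TA (n N : nat) (B : 'I_N -> {set 'I_n}) (A : {set 'I_n}) : nat :=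
  (\sum_(j < N | 1 < #|B j :&: A|) (#|B j :&: A| - 1))%N.

Definition Tmax (n N : nat) (k : nat) (B : 'I_N -> {set 'I_n}) : nat :=
  (\max_(A : {set 'I_n} | #|A| == n - k) TA B A)%N.

Definition Mdim (n N : nat) (k r : nat) (B : 'I_N -> {set 'I_n}) : nat :=
  ((r - 1) * N - Tmax k B)%N.

(* G = [I ; S], a ((r-1)N) x M matrix *)
Definition Gmat (F : fieldType) (n N k r : nat) (B : 'I_N -> {set 'I_n})
    (S : 'M[F]_(Tmax k B, Mdim k r B)) : 'M[F]_((r - 1) * N, Mdim k r B) :=
  \matrix_(p, c)
    if (p < Mdim k r B)%N then ((p == c :> nat)%:R : F)
    else oapp (fun t : 'I_(Tmax k B) => S t c) 0
              (insub (p - Mdim k r B)%N).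

Definition Rmat (F : fieldType) (r : nat) : 'M[F]_(r, r - 1) :=
  \matrix_(s, i) if (s < r - 1)%N then ((s == i :> nat)%:R : F) else 1.

Definition Rj (F : fieldType) (n r : nat) (Bj : {set 'I_n})
    (placej : 'I_r -> 'I_n) (A : {set 'I_n}) : 'M[F]_(r, r - 1) :=
  \matrix_(s, i)
    (if (if (#|Bj :&: A| <= 1)%N then (s < r - 1)%N else placej s \notin A)
     then Rmat F r s i else 0).

Lemma ord_mod_proof (m N : nat) (p : 'I_(m * N)) : (p %% m < m)%N.
Proof.
case: m p => [|m] p; last by rewrite ltn_mod.
by case: p.
Qed.

Lemma ord_div_proof (m N : nat) (p : 'I_(m * N)) : (p %/ m < N)%N.
Proof.
case: m p => [|m] p; first by case: p.
rewrite ltn_divLR //; have := ltn_ord p; move: (val p) => x; by rewrite mulnC.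
Qed.

Definition ord_mod (m N : nat) (p : 'I_(m * N)) : 'I_m := Ordinal (ord_mod_proof p).
Definition ord_div (m N : nat) (p : 'I_(m * N)) : 'I_N := Ordinal (ord_div_proof p).

(* Q_A = block-diagonal matrix with diagonal blocks R_1, ..., R_N
   (row j*r + s <-> block j row s; column j*(r-1) + i <-> block j column i,
   matching the column-wise writing of G d into the (r-1) x N matrix D). *)
Definition QA (F : fieldType) (n r N : nat) (B : 'I_N -> {set 'I_n})
    (place : 'I_N -> 'I_r -> 'I_n) (A : {set 'I_n}) : 'M[F]_(r * N, (r - 1) * N) :=
  \matrix_(p, c)
    if ord_div p == ord_div c
    then Rj F (B (ord_div p)) (place (ord_div p)) A (ord_mod p) (ord_mod c)
    else 0.

(* Main.v *)
Require Import Defs.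
From HB Require Import structures.
From mathcomp Require Import all_boot all_order all_algebra.
Set Implicit Arguments. Unset Strict Implicit. Unset Printing Implicit Defensive.
Import GRing.Theory.
From mathcomp Require Import zify.
Local Open Scope ring_scope.

Lemma card_sum (T : finType) (Q : pred T) : #|[set x | Q x]| = (\sum_x (Q x : nat))%N.
Proof. rewrite cardsE -sum1_card big_mkcond /=; apply: eq_bigr => x _; rewrite unfold_in; by case: (Q x). Qed.

Lemma sum_cast n1 n2 (e : n1 = n2) (F : 'I_n2 -> nat) :
  (\sum_(i < n2) F i = \sum_(i < n1) F (cast_ord e i))%N.
Proof.
rewrite (reindex (cast_ord e)) //; apply: onW_bij.
by exists (cast_ord (esym e)) => i; rewrite ?cast_ordK ?cast_ordKV.
Qed.

Lemma split_last r (hr : (r - 1 < r)%N) (f : 'I_r -> nat) :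
  (\sum_s f s = \sum_(i < r - 1) f (widen_ord (leq_subr 1 r) i) + f (Ordinal hr))%N.
Proof.
case: r hr f => [|r'] hr f; first by [].
rewrite big_ord_recr /= (_ : ord_max = Ordinal hr); last by apply: val_inj => /=; rewrite subn1.
congr (_ + _)%N.
have e : r' = (r'.+1 - 1)%N by rewrite subn1.
rewrite (sum_cast e); apply: eq_bigr => i _; congr f; exact: val_inj.
Qed.

Section Comb.
Variable F : fieldType.
Variables (n r N : nat) (B : 'I_N -> {set 'I_n}) (place : 'I_N -> 'I_r -> 'I_n) (A : {set 'I_n}).
Hypothesis r_gt0 : (0 < r)%N.
Hypothesis vp : valid_placement B place.

Lemma idx_proof m (j : 'I_N) (s : 'I_m) : (j * m + s < m * N)%N.
Proof. have := ltn_ord j; have := ltn_ord s; nia. Qed.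
Definition idx m (j : 'I_N) (s : 'I_m) : 'I_(m * N) := Ordinal (idx_proof j s).

Lemma ord_div_idx m (j : 'I_N) (s : 'I_m) : ord_div (idx j s) = j.
Proof.
apply: val_inj => /=; have hs := ltn_ord s.
by rewrite divnMDl ?(leq_ltn_trans (leq0n _) hs) // divn_small // addn0.
Qed.

Lemma ord_mod_idx m (j : 'I_N) (s : 'I_m) : ord_mod (idx j s) = s.
Proof. by apply: val_inj => /=; rewrite modnMDl modn_small. Qed.

Lemma ord_inj m (c c' : 'I_(m * N)) : ord_div c = ord_div c' -> ord_mod c = ord_mod c' -> c = c'.
Proof.
move=> /(congr1 val) /= h1 /(congr1 val) /= h2.
by apply: val_inj; rewrite /= (divn_eq c m) (divn_eq c' m) h1 h2.
Qed.

Definition wid (i : 'I_(r - 1)) : 'I_r := widen_ord (leq_subr 1 r) i.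
Lemma lastR_proof : (r - 1 < r)%N. Proof. by rewrite subn1 prednK. Qed.
Definition lastR : 'I_r := Ordinal lastR_proof.

Definition keep (j : 'I_N) (s : 'I_r) : bool :=
  if (#|B j :&: A| <= 1)%N then (s < r - 1)%N else place j s \notin A.

Lemma QA_idx (j : 'I_N) (s : 'I_r) c :
  QA F B place A (idx j s) c =
  if j == ord_div c then (if keep j s then Rmat F r s (ord_mod c) else 0) else 0.
Proof. by rewrite !mxE ord_div_idx ord_mod_idx /keep. Qed.


Definition i0 (j : 'I_N) := [pick i : 'I_(r - 1) | ~~ keep j (wid i)].
Definition extra (j : 'I_N) := (1 < #|B j :&: A|)%N && keep j lastR.
Definition inC (c : 'I_((r - 1) * N)) : bool :=
  keep (ord_div c) (wid (ord_mod c)) || (extra (ord_div c) && (i0 (ord_div c) == Some (ord_mod c))).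

Definition Lrow (c : 'I_((r - 1) * N)) : 'rV[F]_(r * N) :=
  let j := ord_div c in
  if keep j (wid (ord_mod c)) then delta_mx 0 (idx j (wid (ord_mod c)))
  else delta_mx 0 (idx j lastR) - \sum_(i : 'I_(r - 1) | keep j (wid i)) delta_mx 0 (idx j (wid i)).

Lemma delta_mul m k (p : 'I_m) (M : 'M[F]_(m, k)) c' : (delta_mx (0 : 'I_1) p *m M) 0 c' = M p c'.
Proof. by rewrite -rowE mxE. Qed.

Lemma row_comb m k (I : finType) (P : pred I) (f : I -> 'I_m) (p : 'I_m) (M : 'M[F]_(m, k)) c' :
  (((delta_mx 0 p : 'rV[F]_m) - \sum_(i | P i) (delta_mx 0 (f i) : 'rV[F]_m)) *m M) 0 c' = M p c' - \sum_(i | P i) M (f i) c'.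
Proof.
rewrite mulmxBl mulmx_suml -rowE !mxE summxE.
by congr (_ - _); apply: eq_bigr => i _; rewrite -rowE mxE.
Qed.

Lemma Rmat_wid (i i' : 'I_(r - 1)) : Rmat F r (wid i) i' = (i == i')%:R.
Proof. by rewrite mxE /= ltn_ord. Qed.

Lemma Rmat_last (i' : 'I_(r - 1)) : Rmat F r lastR i' = 1.
Proof. by rewrite mxE /= ltnn. Qed.

Lemma L_QA c c' : inC c -> inC c' -> (Lrow c *m QA F B place A) 0 c' = (c == c')%:R.
Proof.
rewrite /inC /Lrow => hc hc'.
have ceq : (c == c') = (ord_div c == ord_div c') && (ord_mod c == ord_mod c').
  apply/eqP/andP => [->|[/eqP h1 /eqP h2]]; first by [].
  exact: ord_inj.
case: ifP => kc.
  rewrite -rowE mxE QA_idx kc Rmat_wid ceq.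
  by case: (ord_div c == ord_div c').
move: hc; rewrite kc /= => /andP[ex /eqP i0c].
rewrite row_comb QA_idx.
under eq_bigr => i ki do rewrite QA_idx ki Rmat_wid.
have [ej|nej] := eqVneq (ord_div c) (ord_div c'); last first.
  rewrite ceq (negbTE nej) /= big1 ?subr0 //.
move: ex; rewrite /extra => /andP[_ kl]; rewrite kl Rmat_last ceq ej eqxx /=.
rewrite -ej in hc' *.
case ki': (keep (ord_div c) (wid (ord_mod c'))).
  rewrite (bigD1 (ord_mod c')) //= eqxx big1 => [|i /andP[_ /negbTE ->]] //.
  rewrite addr0 subrr.
  suff /negbTE -> : ord_mod c != ord_mod c' by [].
  apply/negP => /eqP e; have := congr1 (fun z => keep (ord_div c) (wid z)) e; rewrite /= ki'. congruence.
rewrite big1 => [|i ki]; last first.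
  by case: eqP => // e; have := congr1 (fun z => keep (ord_div c) (wid z)) e; rewrite /=; congruence.
move: hc'; rewrite ki' orFb => /andP[_ /eqP]; rewrite i0c => /Some_inj e.
by rewrite e eqxx subr0.
Qed.


Lemma rank_ge_C : (#|[set c | inC c]| <= \rank (QA F B place A))%N.
Proof.
set C := [set c | inC c].
pose Z : 'M[F]_(#|C|, r * N) := \matrix_(a, p) Lrow (enum_val a) 0 p.
pose Rr : 'M[F]_((r - 1) * N, #|C|) := \matrix_(p, b) (p == enum_val b)%:R.
have ZQ : forall a x, (Z *m QA F B place A) a x = (Lrow (enum_val a) *m QA F B place A) 0 x.
  by move=> a x; rewrite !mxE; apply: eq_bigr => p _; rewrite mxE.
have e : Z *m QA F B place A *m Rr = 1%:M.
  apply/matrixP => a b; rewrite mxE (bigD1 (enum_val b)) //= big1 => [|p /negbTE np]; last first.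
    by rewrite [Rr _ _]mxE np mulr0.
  rewrite [Rr _ _]mxE eqxx mulr1 addr0 ZQ L_QA; first by rewrite (inj_eq enum_val_inj) mxE.
    by have := enum_valP a; rewrite inE.
  by have := enum_valP b; rewrite inE.
have := mxrank1 F #|C|; rewrite -e => <-.
by apply: leq_trans (mxrankM_maxl _ _) _; exact: mxrankM_maxr.
Qed.


Lemma lost_le (j : 'I_N) : (\sum_(s : 'I_r) (place j s \in A : nat) <= #|B j :&: A|)%N.
Proof.
rewrite -(card_sum (fun s => place j s \in A)).
have [inj hin] := vp j.
rewrite -(card_imset _ inj).
apply: subset_leq_card; apply/subsetP => x /imsetP[s hs ->].
by move: hs; rewrite !inE hin => ->.
Qed.

Lemma count_block (j : 'I_N) :
  (r - 1 <= \sum_(i < r - 1) (keep j (wid i) || (extra j && (i0 j == Some i)) : nat)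
     + (if (1 < #|B j :&: A|)%N then #|B j :&: A| - 1 else 0))%N.
Proof.
case: (leqP #|B j :&: A| 1) => ha.
  rewrite /= addn0.
  rewrite (eq_bigr (fun _ => 1%N)); last by move=> i _; rewrite /keep ha /= ltn_ord.
  by rewrite sum1_card card_ord.
have kE : forall s, keep j s = (place j s \notin A) by move=> s; rewrite /keep leqNgt ha.
have tot := split_last lastR_proof (fun s => (keep j s : nat)).
have total : (\sum_s (keep j s : nat) + \sum_s (place j s \in A : nat) = r)%N.
  rewrite -big_split /= -[X in _ = X](card_ord r) -sum1_card; apply: eq_bigr => s _.
  by rewrite kE; case: (place j s \in A).
have lost := lost_le j.
rewrite tot -/wid -/lastR in total.
move: total lost.
set kd := (\sum_(i < r - 1) (keep j (wid i) : nat))%N.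
set lo := (\sum_s (place j s \in A : nat))%N.
move=> total lost.
have cnt_ge : (kd <= \sum_(i < r - 1) (keep j (wid i) || (extra j && (i0 j == Some i)) : nat))%N.
  by apply: leq_sum => i _; case: (keep j (wid i)).
case ex: (extra j).
  move: (ex); rewrite /extra ha /= => pk.
  rewrite pk in total.
  case hi: (i0 j) => [i1|].
    have ki1 : keep j (wid i1) = false.
      by move: hi; rewrite /i0; case: pickP => // i /negbTE ki [<-].
    have : (kd + 1 <= \sum_(i < r - 1) (keep j (wid i) || (extra j && (i0 j == Some i)) : nat))%N.
      apply: (@leq_trans (\sum_(i < r - 1) ((keep j (wid i) : nat) + (i == i1 : nat)))).
        rewrite big_split /= leq_add2l (bigD1 i1) //= eqxx big1 // => i /negbTE ->.
        by [].
      apply: leq_sum => i _; rewrite ex hi /=.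
      case: (eqVneq i i1) => [->|ne]; first by rewrite ki1 eqxx.
      by rewrite addn0; case: (keep j (wid i)).
    move=> h; rewrite ex hi /= in h *; change ((kd + 1 + lo)%N = r) in total; clearbody kd lo; move: h; set S := (\sum_(i < r - 1) _)%N; move=> h. clearbody S; set a := #|B j :&: A| in lost ha *. clearbody a. lia.
  have allk : forall i, keep j (wid i).
    by move=> i; move: hi; rewrite /i0; case: pickP => // /(_ i) /negbFE.
  rewrite (eq_bigr (fun _ => 1%N)); last by move=> i _; rewrite allk.
  by rewrite sum1_card card_ord leq_addr.
move: (ex); rewrite /extra ha /= => /negbT pk.
rewrite (negbTE pk) in total; change ((kd + 0 + lo)%N = r) in total.
rewrite ex in cnt_ge.
clearbody kd lo; move: cnt_ge; set S := (\sum_(i < r - 1) _)%N; move=> h.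
clearbody S; set a := #|B j :&: A| in lost ha *; clearbody a; lia.
Qed.

Lemma count_C : ((r - 1) * N - TA B A <= #|[set c | inC c]|)%N.
Proof.
rewrite leq_subLR card_sum.
have -> : (\sum_c (inC c : nat) = \sum_(j < N) \sum_(i < r - 1)
            (keep j (wid i) || (extra j && (i0 j == Some i)) : nat))%N.
  rewrite (reindex (fun p : 'I_N * 'I_(r - 1) => idx p.1 p.2)) /=; last first.
    apply: onW_bij; exists (fun c => (ord_div c, ord_mod c)) => [[j i]|c] /=.
      by rewrite ord_div_idx ord_mod_idx.
    by apply: ord_inj; rewrite ?ord_div_idx ?ord_mod_idx.
  rewrite -(pair_big xpredT xpredT (fun (j : 'I_N) (i : 'I_(r - 1)) => (inC (idx j i) : nat))) /=.
  by apply: eq_bigr => j _; apply: eq_bigr => i _; rewrite /inC ord_div_idx ord_mod_idx.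
have -> : ((r - 1) * N = \sum_(j < N) (r - 1))%N by rewrite sum_nat_const card_ord mulnC.
rewrite /TA (big_mkcond (fun j : 'I_N => 1 < #|B j :&: A|)%N) /= -big_split /=.
by apply: leq_sum => j _; rewrite addnC; exact: count_block.
Qed.

Lemma rank_QA : ((r - 1) * N - TA B A <= \rank (QA F B place A))%N.
Proof. exact: leq_trans count_C rank_ge_C. Qed.

End Comb.
Section Core.
Variable F : finFieldType.
Local Notation q := #|F|.

Lemma affine_count T m M (x : 'rV[F]_m) (Y : 'M[F]_(T, m)) (U : 'M[F]_(M, m)) :
  ~~ (col_mx x Y <= U)%MS ->
  (#|[set s : 'rV[F]_T | ((x + s *m Y)%R <= U)%MS]| * q <= T * q ^ T)%N.
Proof.
move=> nsub.
have [YU|] := boolP (Y <= U)%MS.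
  suff -> : [set s : 'rV[F]_T | ((x + s *m Y)%R <= U)%MS] = set0 by rewrite cards0.
  apply/setP => s; rewrite !inE; apply/negP => h; move: nsub.
  rewrite col_mx_sub YU andbT.
  have -> : x = (x + s *m Y) - s *m Y by rewrite addrK.
  by rewrite addmx_sub // ?eqmx_opp ?(submx_trans (submxMl _ _) YU).
case/row_subPn => i nYi.
set D := [set s : 'rV[F]_T | ((x + s *m Y)%R <= U)%MS].
pose f (p : 'rV[F]_T * F) := p.1 + p.2 *: delta_mx 0 i.
have finj : {in setX D [set: F] &, injective f}.
  move=> [s a] [s' a'] /setXP[/= Ds _] /setXP[/= Ds' _]; rewrite /f /= => e.
  have ea : a = a'.
    apply/eqP; apply/negPn/negP => na.
    have : (((x + s *m Y) - (x + s' *m Y))%R <= U)%MS.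
      by rewrite addmx_sub ?eqmx_opp; move: Ds Ds'; rewrite !inE.
    have -> : (x + s *m Y) - (x + s' *m Y) = (a' - a) *: row i Y.
      have ss : s - s' = (a' - a) *: delta_mx 0 i.
        have -> : s = s' + a' *: delta_mx 0 i - a *: delta_mx 0 i by rewrite -e addrK.
        by rewrite scalerBl addrAC [s' + _]addrC addrK.
      by rewrite [x + s *m Y]addrC addrKA -mulmxBl ss -scalemxAl -rowE.
    move=> h; move/negP: nYi; apply.
    have -> : row i Y = (a' - a)^-1 *: ((a' - a) *: row i Y).
      by rewrite scalerA mulVf ?scale1r // subr_eq0 eq_sym.
    exact: scalemx_sub.
  by congr pair => //; move: e; rewrite ea => /addIr.
have : (#|f @: setX D [set: F]| <= #|[set: 'rV[F]_T]|)%N by apply: subset_leq_card; apply: subsetT.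
rewrite card_in_imset // cardsX cardsT cardsT card_mx mul1n => h.
apply: leq_trans h _; rewrite leq_pmull //; exact: (leq_ltn_trans (leq0n _) (ltn_ord i)).
Qed.



Lemma core T m M (X : 'M[F]_(M, m)) (Y : 'M[F]_(T, m)) :
  (M <= \rank (col_mx X Y))%N ->
  (#|[set S : 'M[F]_(M, T) | (\rank (X + S *m Y)%R < M)%N]| * q <= M * T * q ^ (M * T))%N.
Proof.
elim: M X => [|M IH] X hr.
  suff -> : [set S : 'M[F]_(0, T) | (\rank (X + S *m Y)%R < 0)%N] = set0 by rewrite cards0.
  by apply/setP => S; rewrite !inE ltn0.
have [x [X' eX]] : exists x : 'rV[F]_m, exists X' : 'M[F]_(M, m), X = col_mx x X'.
  by exists (usubmx (X : 'M_(1 + M, m))), (dsubmx (X : 'M_(1 + M, m))); rewrite vsubmxK.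
have hr' : (M <= \rank (col_mx X' Y))%N.
  rewrite -ltnS; apply: leq_trans hr _; rewrite eX.
  apply: (@leq_trans (\rank (x + col_mx X' Y)%MS)).
    have sW : (col_mx X' Y <= x + col_mx X' Y)%MS by exact: addsmxSr.
    have sX' : (X' <= col_mx X' Y)%MS by rewrite -addsmxE addsmxSl.
    have sY : (Y <= col_mx X' Y)%MS by rewrite -addsmxE addsmxSr.
    apply: mxrankS; rewrite col_mx_sub; apply/andP; split.
      rewrite (col_mx_sub x X'); apply/andP; split; first exact: addsmxSl.
      exact: submx_trans sX' sW.
    exact: submx_trans sY sW.
  apply: leq_trans (mxrank_adds_leqif _ _).1 _.
  by have := rank_leq_row x; rewrite -(leq_add2r (\rank (col_mx X' Y))).
have IH' := IH X' hr'.
pose bad' (S' : 'M[F]_(M, T)) := (\rank (X' + S' *m Y)%R < M)%N.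
pose bad (S : 'M[F]_(M.+1, T)) := (\rank (X + S *m Y)%R < M.+1)%N.
have stepB : forall S' : 'M[F]_(M, T),
    ((\sum_(s : 'rV[F]_T) (bad (col_mx s S') : nat)) * q <= bad' S' * q ^ T * q + T * q ^ T)%N.
  move=> S'; have [b|nb] := boolP (bad' S').
    rewrite mul1n; apply: leq_trans (leq_addr _ _); rewrite leq_mul2r; apply/orP; right.
    apply: leq_trans (_ : \sum_(s : 'rV[F]_T) 1 <= _)%N.
      by apply: leq_sum => s _; case: (bad _).
    by rewrite sum1_card card_mx mul1n.
  rewrite mul0n add0n.
  set U := X' + S' *m Y.
  have nsub : ~~ (col_mx x Y <= U)%MS.
    apply/negP; rewrite col_mx_sub => /andP[xU YU].
    have X'U : (X' <= U)%MS.
      have -> : X' = U - S' *m Y by rewrite /U addrK.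
      by rewrite addmx_sub // eqmx_opp (submx_trans (submxMl _ _) YU).
    have : (\rank (col_mx X Y) <= M)%N.
      apply: leq_trans (rank_leq_row U); apply: mxrankS.
      rewrite eX col_mx_sub YU andbT; rewrite (col_mx_sub x X'). by rewrite xU X'U.
    by rewrite leqNgt hr.
  apply: leq_trans (affine_count nsub); rewrite leq_mul2r; apply/orP; right.
  rewrite card_sum; apply: leq_sum => s _.
  case: (boolP (bad _)) => //= hb; rewrite lt0b.
  have e : X + (col_mx s S' : 'M_(M.+1, T)) *m Y = (col_mx (x + s *m Y) U : 'M_(M.+1, m)).
    change ((X : 'M_(1 + M, m)) + (col_mx s S' : 'M_(1 + M, T)) *m Y = (col_mx (x + s *m Y) U : 'M_(1 + M, m))).
    rewrite eX mul_col_mx; exact: (add_col_mx x X' (s *m Y) (S' *m Y) : (_ : 'M_(1 + M, m)) = _).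
  have hb' : (\rank (X + (col_mx s S' : 'M_(M.+1, T)) *m Y)%R < M.+1)%N := hb.
  apply/negPn/negP => nv; move: hb'; rewrite e.
  have : (U < col_mx (x + s *m Y) U)%MS.
    rewrite ltmxE col_mx_sub negb_and nv /= andbT.
    by rewrite -addsmxE addsmxSr.
  rewrite ltmxErank => /andP[_ h1]; rewrite ltnNge.
  move: nb; rewrite /bad' -/U -leqNgt => h2.
  by rewrite (leq_ltn_trans h2 h1).
rewrite card_sum.
rewrite (reindex (fun p : 'rV[F]_T * 'M[F]_(M, T) => (col_mx p.1 p.2 : 'M_(M.+1, T)))) /=; last first.
  apply: onW_bij; exists (fun S : 'M_(M.+1,T) => (usubmx (S : 'M_(1+M,T)), dsubmx (S : 'M_(1+M,T)))).
    by move=> [a b] /=; rewrite col_mxKu col_mxKd.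
  by move=> S /=; rewrite vsubmxK.
rewrite -(pair_big xpredT xpredT (fun (a : 'rV[F]_T) (b : 'M[F]_(M, T)) => (bad (col_mx a b) : nat))) /=.
rewrite exchange_big /= big_distrl /=.
apply: leq_trans; first by apply: leq_sum => S' _; exact: stepB.
rewrite big_split /= -!big_distrl /= sum_nat_const card_mx -card_sum.
move: IH'; rewrite -/bad' mulSn expnD.
set a := #|finset bad'|; set b := (#|F| ^ T)%N; set c := (#|F| ^ (M * T))%N; set d := #|F|.
move=> h; have h' := leq_mul h (leqnn b); nia.
Qed.

Lemma core_col T m M (X : 'M[F]_(m, M)) (Y : 'M[F]_(m, T)) :
  (M <= \rank (row_mx X Y))%N ->
  (#|[set S : 'M[F]_(T, M) | (\rank (X + Y *m S)%R < M)%N]| * q <= M * T * q ^ (T * M))%N.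
Proof.
move=> hr.
have := @core T m M (trmx X) (trmx Y); rewrite -tr_row_mx mxrank_tr => /(_ hr).
rewrite !card_sum mulnC (reindex (fun S : 'M[F]_(M, T) => trmx S)) /=; last first.
  by apply: onW_bij; exists (fun S : 'M[F]_(T, M) => trmx S) => S; rewrite trmxK.
move=> h; rewrite [(T * M)%N]mulnC; apply: leq_trans _ h; rewrite [X in (X <= _)%N]mulnC leq_eqVlt; apply/orP; left; apply/eqP.
congr (_ * _)%N; apply: eq_bigr => S _.
by rewrite -[\rank (X + _)%R]mxrank_tr linearD /= trmx_mul trmxK.
Qed.
End Core.
Definition Emat (F : fieldType) (n N k r : nat) (B : 'I_N -> {set 'I_n}) :
  'M[F]_((r - 1) * N, Tmax k B) :=
  \matrix_(p, t) ((p == (Mdim k r B + t)%N :> nat)%:R).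

Lemma Gmat_split (F : fieldType) (n N k r : nat) (B : 'I_N -> {set 'I_n})
    (S : 'M[F]_(Tmax k B, Mdim k r B)) :
  Gmat S = Gmat 0 + Emat F k r B *m S.
Proof.
apply/matrixP => p c; rewrite !mxE.
have z : forall o : option 'I_(Tmax k B), oapp (fun t => (0 : 'M[F]_(Tmax k B, Mdim k r B)) t c) 0 o = 0.
  by case => [t|] //=; rewrite mxE.
rewrite z.
case: ltnP => hp.
  rewrite big1 ?addr0 // => t _; rewrite mxE.
  have : (p != (Mdim k r B + t)%N :> nat) by apply/eqP => e; move: hp; rewrite e; lia.
  by move/negbTE => ->; rewrite mul0r.
rewrite add0r.
case: insubP => [t _ et0|nt] /=.
  have et : (t : nat) = (p - Mdim k r B)%N := et0.
  have pe : (p == (Mdim k r B + t)%N :> nat) by apply/eqP; lia.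
  rewrite (bigD1 t) //= mxE pe.
  rewrite mul1r big1 ?addr0 // => t' nt'; rewrite mxE.
  have : (p != (Mdim k r B + t')%N :> nat).
    apply/eqP => e; move/eqP: nt'; apply; apply: val_inj; rewrite /= et; lia.
  by move/negbTE => ->; rewrite mul0r.
rewrite big1 // => t _; rewrite mxE.
have : (p != (Mdim k r B + t)%N :> nat).
  apply/eqP => e; move: nt; rewrite e addnC addnK ltn_ord.
  done.
by move/negbTE => ->; rewrite mul0r.
Qed.

Lemma rank_hyp (F : fieldType) n r N k (B : 'I_N -> {set 'I_n}) (place : 'I_N -> 'I_r -> 'I_n)
    (A : {set 'I_n}) :
  valid_placement B place -> #|A| == (n - k)%N ->
  (Mdim k r B <= \rank (row_mx (QA F B place A *m Gmat (0 : 'M[F]_(Tmax k B, Mdim k r B)))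
                              (QA F B place A *m Emat F k r B)))%N.
Proof.
move=> vp hA.
rewrite -mul_mx_row.
case: (leqP ((r - 1) * N) (Tmax k B)) => hT.
  by apply: (leq_trans (_ : Mdim k r B <= 0)%N) => //; rewrite leqn0 /Mdim subn_eq0.
have r0 : (0 < r)%N by case: (posnP r) hT => [->|//]; rewrite sub0n mul0n.
set W := row_mx (Gmat (0 : 'M[F]_(Tmax k B, Mdim k r B))) (Emat F k r B).
have MT : (Mdim k r B + Tmax k B = (r - 1) * N)%N by rewrite /Mdim subnK // ltnW.
pose W' : 'M[F]_(Mdim k r B + Tmax k B, (r - 1) * N) := \matrix_(c, p) ((c == p :> nat)%:R).
have WE : forall p c, W p c = (p == c :> nat)%:R.
  move=> p c; rewrite /W mxE; case: splitP => [c' ec|t ec]; rewrite !mxE ec.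
    case: ltnP => hp //.
    have -> : (p == c' :> nat) = false by apply/negbTE/eqP => e; move: hp; rewrite e leqNgt ltn_ord.
    by case: insub => [t|] //=; rewrite mxE.
  by [].
have WW : W *m W' = 1%:M.
  apply/matrixP => p p'; rewrite !mxE.
  have hp : (p < Mdim k r B + Tmax k B)%N by rewrite MT.
  rewrite (bigD1 (Ordinal hp)) //= big1 ?addr0.
    by rewrite WE mxE eqxx mul1r.
  move=> c nc; rewrite WE.
  have -> : (p == c :> nat) = false.
    by apply/negbTE/eqP => e; move/eqP: nc; apply; apply: val_inj.
  by rewrite mul0r.
apply: (@leq_trans (\rank (QA F B place A))).
  apply: leq_trans (rank_QA F A r0 vp); rewrite /Mdim leq_sub2l //.
  rewrite /Tmax; exact: leq_bigmax_cond.
rewrite -[X in (\rank X <= _)%N]mulmx1 -WW mulmxA; exact: mxrankM_maxl.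
Qed.

Unset Implicit Arguments.
Set Strict Implicit.

Theorem mainTheorem4 (F : finFieldType) (n r lam k N : nat)
    (B : 'I_N -> {set 'I_n}) (place : 'I_N -> 'I_r -> 'I_n) :
  is_bibd r lam B -> valid_placement B place -> (k <= n)%N ->
  (#|[set S : 'M[F]_(Tmax k B, Mdim k r B) |
       [exists A : {set 'I_n},
          (#|A| == n - k)%N && (\rank (QA F B place A *m Gmat S) < Mdim k r B)%N]]|
     * #|F|
   <= 'C(n, k) * Tmax k B * Mdim k r B * #|F| ^ (Tmax k B * Mdim k r B))%N
  /\
  (('C(n, k) * Tmax k B * Mdim k r B < #|F|)%N ->
   exists S : 'M[F]_(Tmax k B, Mdim k r B),
     forall A : {set 'I_n}, #|A| = (n - k)%N ->
       \rank (QA F B place A *m Gmat S) = Mdim k r B).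
Proof.
move=> _ vp kn.
have perA : forall A : {set 'I_n}, #|A| == (n - k)%N ->
  (#|[set S : 'M[F]_(Tmax k B, Mdim k r B) | (\rank (QA F B place A *m Gmat S) < Mdim k r B)%N]|
     * #|F| <= Mdim k r B * Tmax k B * #|F| ^ (Tmax k B * Mdim k r B))%N.
  move=> A hA.
  have := core_col (@rank_hyp F n r N k B place A vp hA).
  suff -> : [set S : 'M[F]_(Tmax k B, Mdim k r B) | (\rank (QA F B place A *m Gmat S) < Mdim k r B)%N]
     = [set S | (\rank (QA F B place A *m Gmat 0 + (QA F B place A *m Emat F k r B) *m S)%R < Mdim k r B)%N] by [].
  by apply/setP => S; rewrite !inE Gmat_split mulmxDr mulmxA.
set badS := [set S : 'M[F]_(Tmax k B, Mdim k r B) | _].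
have bad_le : (#|badS| <= \sum_(A : {set 'I_n} | #|A| == (n - k)%N)
     #|[set S : 'M[F]_(Tmax k B, Mdim k r B) | (\rank (QA F B place A *m Gmat S) < Mdim k r B)%N]|)%N.
  rewrite card_sum.
  rewrite (eq_bigr (fun A => \sum_(S : 'M[F]_(Tmax k B, Mdim k r B))
      ((\rank (QA F B place A *m Gmat S) < Mdim k r B)%N : nat))); last by move=> A _; rewrite card_sum.
  rewrite exchange_big /=; apply: leq_sum => S _.
  case: existsP => [[A0 /andP[c0 b0]]|_] //=.
  by rewrite (bigD1 A0) //= b0.
have part1 : (#|badS| * #|F| <= 'C(n, k) * Tmax k B * Mdim k r B * #|F| ^ (Tmax k B * Mdim k r B))%N.
  apply: leq_trans (leq_mul bad_le (leqnn _)) _.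
  rewrite big_distrl /=.
  apply: (@leq_trans (\sum_(A : {set 'I_n} | #|A| == (n - k)%N) (Mdim k r B * Tmax k B * #|F| ^ (Tmax k B * Mdim k r B)))%N); first by apply: leq_sum => A hA; exact: perA.
  rewrite sum_nat_cond_const card_draws card_ord bin_sub //.
  by rewrite !mulnA (mulnAC _ (Mdim k r B)).
split => // hq.
have q0 : (0 < #|F|)%N by apply/card_gt0P; exists 0.
have hlt : (#|badS| < #|F| ^ (Tmax k B * Mdim k r B))%N.
  rewrite -(ltn_pmul2r q0); apply: leq_ltn_trans part1 _.
  by rewrite mulnC ltn_pmul2l // expn_gt0 q0.
have : (0 < #|~: badS|)%N.
  have e := etrans (cardsC badS) (card_mx F (Tmax k B) (Mdim k r B)).
  by move: hlt; rewrite -e -{1}[#|badS|]addn0 ltn_add2l.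
case/card_gt0P => S; rewrite inE => nS.
exists S => A hA; apply/eqP; rewrite eqn_leq rank_leq_col /= leqNgt; apply/negP => lt.
by move/negP: nS; apply; rewrite inE; apply/existsP; exists A; rewrite hA eqxx lt.
Qed.
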